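(* Let $F$ satisfy (G1)–(G3), let $\mu$ be an ergodic stationary probability measure of $\Pi(F)$, and let $k,k'\in\{1,\dots,N\}$. Then for every $\varepsilon>0$ there exist admissible compositions $G_A,G_B:I_k\to I_{k'}$ with $G_A(I_{\mu,k})\subset U_\varepsilon(A_{\mu,k'})$ and $G_B(I_{\mu,k})\subset U_\varepsilon(B_{\mu,k'})$.
   Context: Setting: $N\ge1$; $\{0,1\}$-matrix $A=(a_{ij})$ with some power having all entries positive; stochastic matrix $\Pi=(\pi_{ij})$ with $\pi_{ij}>0$ iff $a_{ij}=1$. $I=[0,1]$; $f_1,\dots,f_N:I\to I$ strictly increasing $C^1$ diffeomorphisms onto their images with $f_k(I)\subset(0,1)$. $\mathcal I=\{1,\dots,N\}\times I$, $I_k=\{k\}\times I$. $(k,m)$ admissible iff $\pi_{km}>0$. $\Pi(F)$: Markov process jumping from $(i,x)$ to $(j,f_i(x))$ with probability $\pi_{ij}$. $\mu$ stationary iff $\mu_j=\sum_i\pi_{ij}(f_i)_*\mu_i$ ($\mu_k=\mu|_{I_k}$); ergodic = extreme point. $A_{\mu,k}=\min\operatorname{supp}\mu_k$, $B_{\mu,k}=\max\operatorname{supp}\mu_k$, $I_{\mu,k}=[A_{\mu,k},B_{\mu,k}]$. $U_\varepsilon$ denotes the $\varepsilon$-neighborhood. Admissible composition $f_{w_1\dots w_n}=f_{w_n}\circ\dots\circ f_{w_1}:I_{w_1}\to I_{w_{n+1}}$ with each $(w_i,w_{i+1})$, $i\le n$, admissible; simple transition: $w_1,\dots,w_{n+1}$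 distinct; simple return: $w_1,\dots,w_n$ distinct, $w_{n+1}=w_1$. (G1) every fixed point $q$ of a simple return $g$ has $g'(q)\ne1$; (G2) no simple transition maps an attracting (resp. repelling) fixed point of a simple return to a repelling (resp. attracting) fixed point of a simple return; (G3) no $a_1,\dots,a_N\in I$ with $f_i(a_i)=a_j$ for all admissible $(i,j)$. *)

(* Defs.v *)
From Stdlib Require Import Reals List.
Import ListNotations.
Open Scope R_scope.

Fixpoint rsum (n : nat) (f : nat -> R) : R :=
  match n with O => 0 | S n' => rsum n' f + f n' end.

Fixpoint mpow (N : nat) (a : nat -> nat -> R) (p : nat) (i j : nat) : R :=
  match p with
  | O => if Nat.eqb i j then 1 else 0
  | S p' => rsum N (fun l => mpow N a p' i l * a l j)
  end.

Definition inI (x : R) : Prop := 0 <= x <= 1.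

Definition has_deriv_I (g : R -> R) (x l : R) : Prop :=
  forall eps, eps > 0 -> exists delta, delta > 0 /\
    forall y, inI y -> 0 < Rabs (y - x) < delta ->
      Rabs ((g y - g x) / (y - x) - l) < eps.

(* f : I -> I strictly increasing C^1 diffeomorphism onto its image, f(I) in (0,1) *)
Definition good_map (g : R -> R) : Prop :=
  (forall x y, inI x -> inI y -> x < y -> g x < g y) /\
  (exists dg : R -> R,
     (forall x, inI x -> has_deriv_I g x (dg x)) /\
     (forall x, inI x -> dg x > 0) /\
     (forall x, inI x -> forall eps, eps > 0 -> exists delta, delta > 0 /\
        forall y, inI y -> Rabs (y - x) < delta -> Rabs (dg y - dg x) < eps)) /\
  (forall x, inI x -> 0 < g x < 1).

(* Word [w1; ...; w_{n+1}] encodes f_{w_n} o ... o f_{w_1} : I_{w1} -> I_{w_{n+1}}. *)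
Fixpoint acomp (f : nat -> R -> R) (w : list nat) (x : R) : R :=
  match w with
  | [] => x
  | [_] => x
  | a :: ((_ :: _) as t) => acomp f t (f a x)
  end.

Fixpoint adm_chain (pi : nat -> nat -> R) (w : list nat) : Prop :=
  match w with
  | a :: ((b :: _) as t) => pi a b > 0 /\ adm_chain pi t
  | _ => True
  end.

Definition admissible (N : nat) (pi : nat -> nat -> R) (w : list nat) : Prop :=
  (2 <= length w)%nat /\ (forall c, In c w -> (c < N)%nat) /\ adm_chain pi w.

Definition simple_transition N pi (w : list nat) : Prop :=
  admissible N pi w /\ NoDup w.

Definition simple_return N pi (w : list nat) : Prop :=
  admissible N pi w /\ NoDup (removelast w) /\ last w 0%nat = hd 0%nat w.

Definition attracting_fp N pi f (w : list nat) (q : R) : Prop :=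
  simple_return N pi w /\ inI q /\ acomp f w q = q /\
  exists l, has_deriv_I (acomp f w) q l /\ Rabs l < 1.

Definition repelling_fp N pi f (w : list nat) (q : R) : Prop :=
  simple_return N pi w /\ inI q /\ acomp f w q = q /\
  exists l, has_deriv_I (acomp f w) q l /\ Rabs l > 1.

Definition G1 N pi f : Prop :=
  forall w q l, simple_return N pi w -> inI q -> acomp f w q = q ->
    has_deriv_I (acomp f w) q l -> l <> 1.

Definition G2 N pi f : Prop :=
  forall v w w' q q', simple_transition N pi v ->
    hd 0%nat v = hd 0%nat w -> last v 0%nat = hd 0%nat w' ->
    ((attracting_fp N pi f w q -> repelling_fp N pi f w' q' -> acomp f v q <> q') /\
     (repelling_fp N pi f w q -> attracting_fp N pi f w' q' -> acomp f v q <> q')).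

Definition G3 N pi f : Prop :=
  ~ exists a : nat -> R, (forall i, (i < N)%nat -> inI (a i)) /\
      forall i j, (i < N)%nat -> (j < N)%nat -> pi i j > 0 -> f i (a i) = a j.

Definition is_open (U : R -> Prop) : Prop :=
  forall x, U x -> exists eps, eps > 0 /\ forall y, Rabs (y - x) < eps -> U y.

Inductive borel : (R -> Prop) -> Prop :=
| borel_open U : is_open U -> borel U
| borel_compl U : borel U -> borel (fun x => ~ U x)
| borel_union (A : nat -> R -> Prop) :
    (forall n, borel (A n)) -> borel (fun x => exists n, A n x).

Definition measure_on_I (m : (R -> Prop) -> R) : Prop :=
  m (fun _ => False) = 0 /\
  (forall B, borel B -> 0 <= m B) /\
  (forall A : nat -> R -> Prop, (forall n, borel (A n)) ->
     (forall n p x, n <> p -> A n x -> A p x -> False) ->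
     infinite_sum (fun n => m (A n)) (m (fun x => exists n, A n x))) /\
  m (fun x => ~ inI x) = 0.

(* mu k = restriction of mu to I_k, k = 0..N-1 *)
Definition prob_measure N (mu : nat -> (R -> Prop) -> R) : Prop :=
  (forall k, (k < N)%nat -> measure_on_I (mu k)) /\
  rsum N (fun k => mu k (fun _ => True)) = 1.

Definition stationary N pi (f : nat -> R -> R) (mu : nat -> (R -> Prop) -> R) : Prop :=
  forall j B, (j < N)%nat -> borel B ->
    mu j B = rsum N (fun i => pi i j * mu i (fun x => inI x /\ B (f i x))).

Definition stat_prob N pi f mu : Prop := prob_measure N mu /\ stationary N pi f mu.

Definition same_measure N (mu nu : nat -> (R -> Prop) -> R) : Prop :=
  forall k B, (k < N)%nat -> borel B -> mu k B = nu k B.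

Definition ergodic N pi f mu : Prop :=
  stat_prob N pi f mu /\
  forall mu1 mu2 t, stat_prob N pi f mu1 -> stat_prob N pi f mu2 -> 0 < t < 1 ->
    (forall k B, (k < N)%nat -> borel B -> mu k B = t * mu1 k B + (1 - t) * mu2 k B) ->
    same_measure N mu1 mu2.

Definition in_supp (m : (R -> Prop) -> R) (x : R) : Prop :=
  forall eps, eps > 0 -> m (fun y => Rabs (y - x) < eps) > 0.

Definition is_min_supp m A : Prop := in_supp m A /\ forall x, in_supp m x -> A <= x.
Definition is_max_supp m B : Prop := in_supp m B /\ forall x, in_supp m x -> x <= B.

(* Main.v *)
Require Import Defs.
From Stdlib Require Import Reals List Lra Lia Classical ClassicalEpsilon FunctionalExtensionality PropExtensionality.
Import ListNotations.
Open Scope R_scope.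

Lemma pred_ext (U V : R -> Prop) : (forall x, U x <-> V x) -> U = V.
Proof. intro H; apply functional_extensionality; intro x; apply propositional_extensionality; auto. Qed.

Lemma borel_ext U V : (forall x, U x <-> V x) -> borel U -> borel V.
Proof. intros H HU; rewrite <- (pred_ext U V H); exact HU. Qed.

Lemma borel_union2 U V : borel U -> borel V -> borel (fun x => U x \/ V x).
Proof.
  intros HU HV.
  apply borel_ext with (U := fun x => exists n, (match n with O => U | _ => V end) x).
  - intro x; split.
    + intros [[|n] H]; auto.
    + intros [H|H]; [exists O | exists 1%nat]; auto.
  - apply borel_union; intros [|n]; auto.
Qed.

Lemma borel_compl U : borel U -> borel (fun x => ~ U x).
Proof. apply borel_compl. Qed.

Lemma borel_inter U V : borel U -> borel V -> borel (fun x => U x /\ V x).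
Proof.
  intros HU HV.
  apply borel_ext with (U := fun x => ~ ((~ U x) \/ (~ V x))).
  - intro x; split.
    + intro H; split; apply NNPP; tauto.
    + tauto.
  - apply borel_compl, borel_union2; apply borel_compl; auto.
Qed.

Lemma borel_true : borel (fun _ => True).
Proof. apply borel_open; intros x _; exists 1; split; [lra|auto]. Qed.

Lemma borel_false : borel (fun _ => False).
Proof. apply borel_open; intros x []. Qed.

Lemma borel_ball c r : borel (fun y => Rabs (y - c) < r).
Proof.
  apply borel_open; intros x Hx; exists (r - Rabs (x - c)); split; [lra|].
  intros y Hy.
  assert (Rabs (y - c) <= Rabs (y - x) + Rabs (x - c)).
  { replace (y - c) with ((y - x) + (x - c)) by ring; apply Rabs_triang. }
  lra.
Qed.

Lemma borel_inI : borel inI.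
Proof.
  apply borel_ext with (U := fun x => ~ (x < 0 \/ x > 1)).
  - intro x; unfold inI; split; intro H.
    + split; apply Rnot_lt_le; tauto.
    + lra.
  - apply borel_compl, borel_open; intros x [H|H].
    + exists (- x); split; [lra|]; intros y Hy; left.
      unfold Rabs in Hy; destruct (Rcase_abs (y - x)); lra.
    + exists (x - 1); split; [lra|]; intros y Hy; right.
      unfold Rabs in Hy; destruct (Rcase_abs (y - x)); lra.
Qed.

Lemma borel_ninI : borel (fun x => ~ inI x).
Proof. apply borel_compl, borel_inI. Qed.

Lemma borel_upset (U : R -> Prop) :
  (forall y z, U y -> y <= z -> U z) -> borel U.
Proof.
  intros Hup.
  destruct (classic (exists c, ~ U c)) as [[c Hc]|Hall].
  2:{ apply borel_ext with (U := fun _ => True).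
      - intro x; split; auto; intros _; apply NNPP; intro H; apply Hall; eauto.
      - apply borel_true. }
  destruct (classic (exists y, U y)) as [[y0 Hy0]|Hemp].
  2:{ apply borel_ext with (U := fun _ => False).
      - intro x; split; [tauto|]; intro H; apply Hemp; eauto.
      - apply borel_false. }
  assert (Hlb : forall y, U y -> c < y).
  { intros y Hy; destruct (Rlt_le_dec c y); auto; exfalso; apply Hc; eauto. }
  destruct (completeness (fun z => U (- z))) as [L [HL1 HL2]].
  { exists (- c); intros z Hz; apply Hlb in Hz; lra. }
  { exists (- y0); rewrite Ropp_involutive; auto. }
  assert (Hgt : forall y, y > - L -> U y).
  { intros y Hy; apply NNPP; intro Hn.
    assert (L <= - y).
    { apply HL2; intros z Hz; destruct (Rle_dec z (- y)) as [|Hnz]; auto.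
      exfalso; apply Hn; apply Hup with (y := - z); auto; lra. }
    lra. }
  assert (Hlt : forall y, y < - L -> ~ U y).
  { intros y Hy Huy; assert (- y <= L) by (apply HL1; rewrite Ropp_involutive; auto); lra. }
  destruct (classic (U (- L))) as [HUL|HUL].
  - apply borel_ext with (U := fun y => ~ (y < - L)).
    + intro y; split; intro H.
      * destruct (Rtotal_order y (- L)) as [H1|[H1|H1]]; [tauto| subst; auto | auto].
      * intro H1; apply (Hlt y H1); auto.
    + apply borel_compl, borel_open; intros x Hx; exists (- L - x); split; [lra|].
      intros y Hy; unfold Rabs in Hy; destruct (Rcase_abs (y - x)); lra.
  - apply borel_ext with (U := fun y => y > - L).
    + intro y; split; intro H; auto.
      destruct (Rtotal_order y (- L)) as [H1|[H1|H1]]; auto.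
      * exfalso; apply (Hlt y H1); auto.
      * subst; contradiction.
    + apply borel_open; intros x Hx; exists (x + L); split; [lra|].
      intros y Hy; unfold Rabs in Hy; destruct (Rcase_abs (y - x)); lra.
Qed.

Lemma borel_downset (U : R -> Prop) :
  (forall y z, U z -> y <= z -> U y) -> borel U.
Proof.
  intros Hd.
  apply borel_ext with (U := fun x => ~ ~ U x).
  - intro x; split; [apply NNPP| tauto].
  - apply borel_compl, borel_upset; intros y z Hy Hyz Hz; apply Hy; eapply Hd; eauto.
Qed.

Definition contI (g : R -> R) : Prop :=
  forall x, inI x -> forall eps, eps > 0 -> exists delta, delta > 0 /\
    forall y, inI y -> Rabs (y - x) < delta -> Rabs (g y - g x) < eps.

Lemma deriv_cont g x l : has_deriv_I g x l -> forall eps, eps > 0 -> exists delta, delta > 0 /\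
    forall y, inI y -> Rabs (y - x) < delta -> Rabs (g y - g x) < eps.
Proof.
  intros Hd eps Heps.
  destruct (Hd 1 Rlt_0_1) as [d [Hd0 Hd1]].
  set (M := Rabs l + 1).
  assert (HM : M > 0) by (unfold M; pose proof (Rabs_pos l); lra).
  exists (Rmin d (eps / M)); split.
  { apply Rmin_pos; auto; unfold Rdiv; apply Rmult_lt_0_compat; auto; apply Rinv_0_lt_compat; auto. }
  intros y Hy Hyx.
  destruct (Req_dec y x) as [->|Hne].
  { rewrite Rminus_eq_0, Rabs_R0; auto. }
  assert (Hp : 0 < Rabs (y - x)) by (apply Rabs_pos_lt; lra).
  assert (H1 := Hd1 y Hy (conj Hp (Rlt_le_trans _ _ _ Hyx (Rmin_l _ _)))).
  assert (Hq : Rabs ((g y - g x) / (y - x)) <= M).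
  { unfold M.
    replace ((g y - g x) / (y - x)) with (((g y - g x) / (y - x) - l) + l) by ring.
    pose proof (Rabs_triang ((g y - g x) / (y - x) - l) l); lra. }
  assert (He : g y - g x = ((g y - g x) / (y - x)) * (y - x)) by (field; lra).
  rewrite He, Rabs_mult.
  assert (Hyx2 : Rabs (y - x) < eps / M) by (eapply Rlt_le_trans; [exact Hyx| apply Rmin_r]).
  apply Rle_lt_trans with (M * Rabs (y - x)).
  { apply Rmult_le_compat_r; auto; apply Rabs_pos. }
  apply Rlt_le_trans with (M * (eps / M)).
  { apply Rmult_lt_compat_l; auto. }
  right; field; lra.
Qed.

Lemma good_contI g : good_map g -> contI g.
Proof.
  intros [_ [[dg [Hd _]] _]] x Hx; eapply deriv_cont; eauto.
Qed.

Lemma borel_preimage g B : contI g -> borel B -> borel (fun x => inI x /\ B (g x)).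
Proof.
  intros Hc HB; induction HB as [U HU|U HU IH|A HA IH].
  - set (V := fun x => exists d, d > 0 /\ forall y, inI y -> Rabs (y - x) < d -> U (g y)).
    apply borel_ext with (U := fun x => inI x /\ V x).
    + intro x; split; intros [Hx H]; split; auto.
      * destruct H as [d [Hd H]]; apply H; auto; rewrite Rminus_eq_0, Rabs_R0; auto.
      * destruct (HU _ H) as [e [He HUe]].
        destruct (Hc x Hx e He) as [d [Hd Hd']].
        exists d; split; auto.
    + apply borel_inter; [apply borel_inI|].
      apply borel_open; intros x [d [Hd H]].
      exists (d / 2); split; [lra|]; intros z Hz.
      exists (d / 2); split; [lra|]; intros y Hy Hyz; apply H; auto.
      replace (y - x) with ((y - z) + (z - x)) by ring.
      pose proof (Rabs_triang (y - z) (z - x)); lra.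
  - apply borel_ext with (U := fun x => inI x /\ ~ (inI x /\ U (g x))).
    + intro x; tauto.
    + apply borel_inter; [apply borel_inI| apply borel_compl; auto].
  - apply borel_ext with (U := fun x => exists n, inI x /\ A n (g x)).
    + intro x; split; [intros [n [H1 H2]]; eauto | intros [H1 [n H2]]; eauto].
    + apply borel_union; auto.
Qed.

Lemma M_ext (m : (R -> Prop) -> R) U V : (forall x, U x <-> V x) -> m U = m V.
Proof. intro H; rewrite (pred_ext U V H); auto. Qed.

Lemma M_add m B D : measure_on_I m -> borel B -> borel D ->
  m B = m (fun x => B x /\ D x) + m (fun x => B x /\ ~ D x).
Proof.
  intros [H0 [Hpos [Hadd _]]] HB HD.
  set (A := fun n : nat => match n with O => (fun x => B x /\ D x)
             | 1%nat => (fun x => B x /\ ~ D x) | _ => (fun _ => False) end).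
  assert (HA : forall n, borel (A n)).
  { intros [|[|n]]; simpl; [apply borel_inter| apply borel_inter| apply borel_false]; auto.
    apply borel_compl; auto. }
  assert (Hdis : forall n p x, n <> p -> A n x -> A p x -> False).
  { intros [|[|n]] [|[|p]] x Hnp; simpl; try tauto; intros; lia. }
  pose proof (Hadd A HA Hdis) as Hs.
  assert (Hu : m (fun x => exists n, A n x) = m B).
  { apply M_ext; intro x; split.
    - intros [[|[|n]] H]; simpl in H; tauto.
    - intro Hb; destruct (classic (D x)).
      + exists O; simpl; auto.
      + exists 1%nat; simpl; auto. }
  rewrite Hu in Hs.
  apply (uniqueness_sum _ _ _ Hs).
  intros eps Heps; exists 1%nat; intros n Hn.
  assert (sum_f_R0 (fun n => m (A n)) n = m (fun x => B x /\ D x) + m (fun x => B x /\ ~ D x)).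
  { induction n as [|n IH]; [lia|].
    destruct n as [|n]; [simpl; auto|].
    rewrite tech5, IH by lia; simpl; rewrite H0; ring. }
  rewrite H; unfold Rdist; rewrite Rminus_diag, Rabs_R0; auto.
Qed.

Lemma M_pos m B : measure_on_I m -> borel B -> 0 <= m B.
Proof. intros [_ [H _]] HB; auto. Qed.

Lemma M_mono m B D : measure_on_I m -> borel B -> borel D ->
  (forall x, B x -> D x) -> m B <= m D.
Proof.
  intros Hm HB HD Hs.
  rewrite (M_add m D B Hm HD HB).
  rewrite (M_ext m (fun x => D x /\ B x) B) by (intro x; split; [tauto| auto]).
  pose proof (M_pos m (fun x => D x /\ ~ B x) Hm (borel_inter _ _ HD (borel_compl _ HB))); lra.
Qed.

Lemma M_inI m B : measure_on_I m -> borel B -> m B = m (fun x => B x /\ inI x).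
Proof.
  intros Hm HB.
  rewrite (M_add m B inI Hm HB borel_inI).
  assert (m (fun x => B x /\ ~ inI x) = 0).
  { pose proof Hm as Hm'; destruct Hm' as [H0 [Hp [_ Hn]]].
    apply Rle_antisym.
    - rewrite <- Hn; apply M_mono; [auto| apply borel_inter; auto; apply borel_ninI
      | apply borel_ninI | tauto].
    - apply Hp, borel_inter; auto; apply borel_ninI. }
  lra.
Qed.

Lemma rsum_ext n f g : (forall i, (i < n)%nat -> f i = g i) -> rsum n f = rsum n g.
Proof. induction n; simpl; intros H; auto; rewrite IHn, H; auto. Qed.

Lemma rsum_plus n f g : rsum n (fun i => f i + g i) = rsum n f + rsum n g.
Proof. induction n; simpl; [ring| rewrite IHn; ring]. Qed.

Lemma rsum_minus n f g : rsum n (fun i => f i - g i) = rsum n f - rsum n g.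
Proof. induction n; simpl; [ring| rewrite IHn; ring]. Qed.

Lemma rsum_scal n c f : rsum n (fun i => c * f i) = c * rsum n f.
Proof. induction n; simpl; [ring| rewrite IHn; ring]. Qed.

Lemma rsum_swap n p (f : nat -> nat -> R) :
  rsum n (fun i => rsum p (fun j => f i j)) = rsum p (fun j => rsum n (fun i => f i j)).
Proof.
  induction n; simpl.
  - induction p; simpl; auto; rewrite <- IHp; ring.
  - rewrite IHn, <- rsum_plus; auto.
Qed.

Lemma rsum_ge0 n f : (forall i, (i < n)%nat -> 0 <= f i) -> 0 <= rsum n f.
Proof. induction n; simpl; intros H; [lra|]. pose proof (H n ltac:(lia)); pose proof (IHn (fun i Hi => H i ltac:(lia))); lra. Qed.

Lemma rsum_ge_term n f i : (forall i, (i < n)%nat -> 0 <= f i) -> (i < n)%nat -> f i <= rsum n f.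
Proof.
  induction n; simpl; intros H Hi; [lia|].
  destruct (Nat.eq_dec i n) as [->|Hne].
  - pose proof (rsum_ge0 n f (fun j Hj => H j ltac:(lia))); lra.
  - pose proof (IHn (fun j Hj => H j ltac:(lia)) ltac:(lia)); pose proof (H n ltac:(lia)); lra.
Qed.

Lemma rsum_zero n f : (forall i, (i < n)%nat -> 0 <= f i) -> rsum n f = 0 ->
  forall i, (i < n)%nat -> f i = 0.
Proof.
  intros H Hs i Hi; pose proof (rsum_ge_term n f i H Hi); pose proof (H i Hi); lra.
Qed.

Lemma rsum_pos_ex n f : rsum n f > 0 -> exists i, (i < n)%nat /\ f i > 0.
Proof.
  induction n; simpl; intros H; [lra|].
  destruct (Rlt_le_dec 0 (f n)) as [Hp|Hp].
  - exists n; split; auto.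
  - destruct IHn as [i [Hi Hf]]; [lra|]; exists i; split; auto.
Qed.

Lemma acomp_app f w j x : w <> [] ->
  acomp f (w ++ [j]) x = f (last w 0%nat) (acomp f w x).
Proof.
  revert x; induction w as [|a t IH]; intros x Hw; [congruence|].
  destruct t as [|b t']; [reflexivity|].
  change ((a :: b :: t') ++ [j]) with (a :: ((b :: t') ++ [j])).
  change (acomp f (a :: (b :: t') ++ [j]) x) with (acomp f ((b :: t') ++ [j]) (f a x)).
  change (last (a :: b :: t') 0%nat) with (last (b :: t') 0%nat).
  change (acomp f (a :: b :: t') x) with (acomp f (b :: t') (f a x)).
  apply IH; congruence.
Qed.

Lemma adm_chain_app pi w j : w <> [] -> adm_chain pi w -> pi (last w 0%nat) j > 0 ->
  adm_chain pi (w ++ [j]).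
Proof.
  induction w as [|a t IH]; intros Hw Hc Hp; [congruence|].
  destruct t as [|b t']; [simpl in *; auto|].
  destruct Hc as [H1 H2].
  change ((a :: b :: t') ++ [j]) with (a :: (b :: t' ++ [j])).
  simpl. split; auto.
  apply IH; auto; congruence.
Qed.

Lemma last_app1 (w : list nat) j : last (w ++ [j]) 0%nat = j.
Proof. apply last_last. Qed.

Lemma hd_app1 (w : list nat) j : w <> [] -> hd 0%nat (w ++ [j]) = hd 0%nat w.
Proof. destruct w; simpl; congruence. Qed.

Lemma acomp_inI N f w x : (forall i, (i < N)%nat -> good_map (f i)) ->
  (forall c, In c w -> (c < N)%nat) -> inI x -> inI (acomp f w x).
Proof.
  intros Hf; revert x; induction w as [|a t IH]; intros x Hw Hx; auto.
  destruct t as [|b t']; auto.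
  simpl (acomp f (a :: b :: t') x).
  apply IH; [intros c Hc; apply Hw; simpl in *; tauto|].
  destruct (Hf a (Hw a (or_introl eq_refl))) as [_ [_ H]].
  pose proof (H x Hx); unfold inI; lra.
Qed.

Lemma acomp_01 N f w x : (forall i, (i < N)%nat -> good_map (f i)) ->
  (forall c, In c w -> (c < N)%nat) -> (2 <= length w)%nat -> inI x -> 0 < acomp f w x < 1.
Proof.
  intros Hf; revert x; induction w as [|a t IH]; intros x Hw Hl Hx; [simpl in Hl; lia|].
  destruct t as [|b t']; [simpl in Hl; lia|].
  simpl (acomp f (a :: b :: t') x).
  destruct (Hf a (Hw a (or_introl eq_refl))) as [_ [_ H]].
  destruct t' as [|c t''].
  - simpl; auto.
  - apply IH; [intros c' Hc; apply Hw; simpl in *; tauto| simpl; lia|].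
    pose proof (H x Hx); unfold inI; lra.
Qed.

Lemma good_le g x y : good_map g -> inI x -> inI y -> x <= y -> g x <= g y.
Proof.
  intros [Hm _] Hx Hy [Hlt|Heq]; [left; apply Hm; auto| subst; lra].
Qed.

Lemma acomp_mono N f w x y : (forall i, (i < N)%nat -> good_map (f i)) ->
  (forall c, In c w -> (c < N)%nat) -> inI x -> inI y -> x <= y -> acomp f w x <= acomp f w y.
Proof.
  intros Hf; revert x y; induction w as [|a t IH]; intros x y Hw Hx Hy Hxy; auto.
  destruct t as [|b t']; auto.
  simpl.
  assert (Hga := Hf a (Hw a (or_introl eq_refl))).
  pose proof Hga as [_ [_ H]].
  apply IH; [intros c Hc; apply Hw; simpl in *; tauto| | |apply good_le; auto];
  pose proof (H x Hx); pose proof (H y Hy); unfold inI; lra.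
Qed.

Lemma path_exists N (a pi : nat -> nat -> R)
  (Ha01 : forall i j, (i < N)%nat -> (j < N)%nat -> a i j = 0 \/ a i j = 1)
  (Hpi_a : forall i j, (i < N)%nat -> (j < N)%nat -> (pi i j > 0 <-> a i j = 1)) :
  forall p i j, (i < N)%nat -> (j < N)%nat -> mpow N a p i j > 0 ->
  exists w, w <> [] /\ hd 0%nat w = i /\ last w 0%nat = j /\ length w = S p /\
    (forall c, In c w -> (c < N)%nat) /\ adm_chain pi w.
Proof.
  induction p as [|p IH]; intros i j Hi Hj Hm.
  - simpl in Hm. destruct (Nat.eqb_spec i j) as [->|]; [|lra].
    exists [j]; repeat split; simpl; auto; try congruence.
    intros c [->|[]]; auto.
  - simpl in Hm. destruct (rsum_pos_ex _ _ Hm) as [l [Hl Hp]].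
    destruct (Ha01 l j Hl Hj) as [H0|H1].
    { rewrite H0, Rmult_0_r in Hp; lra. }
    rewrite H1, Rmult_1_r in Hp.
    destruct (IH i l Hi Hl Hp) as [w [Hw [Hh [Hla [Hlen [HN Hc]]]]]].
    exists (w ++ [j]); repeat split.
    + destruct w; simpl; congruence.
    + rewrite hd_app1; auto.
    + apply last_app1.
    + rewrite length_app, Hlen; simpl; lia.
    + intros c Hc'; apply in_app_or in Hc'; destruct Hc' as [H|[<-|[]]]; auto.
    + apply adm_chain_app; auto; rewrite Hla; apply Hpi_a; auto.
Qed.

Lemma supp_inI m x : measure_on_I m -> in_supp m x -> inI x.
Proof.
  intros Hm Hs; apply NNPP; intro Hn.
  assert (He : exists e, e > 0 /\ forall y, Rabs (y - x) < e -> ~ inI y).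
  { unfold inI in Hn. destruct (Rlt_le_dec x 0) as [H|H].
    - exists (- x); split; [lra|]; intros y Hy; unfold Rabs in Hy; destruct (Rcase_abs (y - x)); unfold inI; lra.
    - assert (x > 1) by (destruct (Rle_dec x 1); [exfalso; apply Hn; lra| lra]).
      exists (x - 1); split; [lra|]; intros y Hy; unfold Rabs in Hy; destruct (Rcase_abs (y - x)); unfold inI; lra. }
  destruct He as [e [He Hy]].
  pose proof (Hs e He).
  assert (m (fun y => Rabs (y - x) < e) <= m (fun y => ~ inI y)).
  { apply M_mono; auto; [apply borel_ball| apply borel_ninI]. }
  destruct Hm as [_ [_ [_ Hz]]]; lra.
Qed.

Lemma restr_measure m E c : measure_on_I m -> borel E -> 0 <= c ->
  measure_on_I (fun B => c * m (fun y => B y /\ E y)).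
Proof.
  intros Hm HE Hc. pose proof Hm as [H0 [Hp [Hadd Hn]]].
  split; [|split; [|split]].
  - rewrite (M_ext m _ (fun _ => False)) by tauto; rewrite H0; ring.
  - intros B HB; apply Rmult_le_pos; auto; apply Hp, borel_inter; auto.
  - intros A HA Hdis.
    assert (Hs := Hadd (fun n y => A n y /\ E y) (fun n => borel_inter _ _ (HA n) HE)
                       (fun n p x Hnp H1 H2 => Hdis n p x Hnp (proj1 H1) (proj1 H2))).
    cbv beta in Hs.
    rewrite (M_ext m (fun x => exists n, A n x /\ E x) (fun y => (exists n, A n y) /\ E y)) in Hs
      by (intro x; split; [intros [n [H1 H2]]; eauto| intros [[n H1] H2]; eauto]).
    intros eps Heps.
    assert (Hc2 : Un_cv (fun _ : nat => c) c).
    { intros e He; exists O; intros; unfold Rdist; rewrite Rminus_diag, Rabs_R0; auto. }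
    destruct (CV_mult _ _ _ _ Hc2 Hs eps Heps) as [K HK].
    exists K; intros n Hkn.
    replace (sum_f_R0 (fun n0 => c * m (fun y => A n0 y /\ E y)) n)
      with (c * sum_f_R0 (fun n0 => m (fun y => A n0 y /\ E y)) n).
    + apply HK; auto.
    + clear; induction n; simpl; auto; rewrite <- IHn; ring.
  - assert (m (fun y => ~ inI y /\ E y) = 0).
    { apply Rle_antisym.
      - rewrite <- Hn; apply M_mono; auto; [apply borel_inter; auto; apply borel_ninI | apply borel_ninI| tauto].
      - apply Hp, borel_inter; auto; apply borel_ninI. }
    rewrite H; ring.
Qed.

Lemma supp_step N pi f mu i j x :
  (forall k, (k < N)%nat -> measure_on_I (mu k)) ->
  stationary N pi f mu ->
  (forall i j, (i < N)%nat -> (j < N)%nat -> 0 <= pi i j) ->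
  (forall i, (i < N)%nat -> good_map (f i)) ->
  (i < N)%nat -> (j < N)%nat -> pi i j > 0 ->
  in_supp (mu i) x -> in_supp (mu j) (f i x).
Proof.
  intros Hms Hst Hpn Hf Hi Hj Hpij Hs eps Heps.
  assert (Hx : inI x) by (apply (supp_inI (mu i)); auto).
  destruct (good_contI _ (Hf i Hi) x Hx eps Heps) as [d [Hd Hc]].
  rewrite (Hst j _ Hj (borel_ball _ _)).
  assert (Hnn : forall l, (l < N)%nat ->
     0 <= pi l j * mu l (fun y => inI y /\ Rabs (f l y - f i x) < eps)).
  { intros l Hl; apply Rmult_le_pos; auto; apply M_pos; auto.
    apply (borel_preimage (f l) (fun z => Rabs (z - f i x) < eps)); [apply good_contI; auto| apply borel_ball]. }
  eapply Rlt_le_trans; [| apply (rsum_ge_term _ _ i Hnn Hi)].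
  apply Rmult_lt_0_compat; auto.
  eapply Rlt_le_trans; [apply (Hs d Hd)|].
  rewrite (M_inI (mu i)) by (auto; apply borel_ball).
  apply M_mono; auto.
  - apply borel_inter; [apply borel_ball| apply borel_inI].
  - apply (borel_preimage (f i) (fun z => Rabs (z - f i x) < eps)); [apply good_contI; auto| apply borel_ball].
  - intros y [H1 H2]; split; auto.
Qed.

Lemma supp_chain N pi f mu w x :
  (forall k, (k < N)%nat -> measure_on_I (mu k)) ->
  stationary N pi f mu ->
  (forall i j, (i < N)%nat -> (j < N)%nat -> 0 <= pi i j) ->
  (forall i, (i < N)%nat -> good_map (f i)) ->
  (forall c, In c w -> (c < N)%nat) -> adm_chain pi w ->
  in_supp (mu (hd 0%nat w)) x -> in_supp (mu (last w 0%nat)) (acomp f w x).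
Proof.
  intros Hms Hst Hpn Hf; revert x; induction w as [|a t IH]; intros x Hw Hc Hs; auto.
  destruct t as [|b t']; auto.
  destruct Hc as [Hab Hc].
  change (acomp f (a :: b :: t') x) with (acomp f (b :: t') (f a x)).
  change (last (a :: b :: t') 0%nat) with (last (b :: t') 0%nat).
  apply IH; auto.
  - intros c Hc'; apply Hw; simpl in *; tauto.
  - simpl. apply supp_step with (N := N) (pi := pi); auto;
    apply Hw; simpl; auto.
Qed.

Lemma dichotomy N pi f mu (E : nat -> R -> Prop)
  (Hpn : forall i j, (i < N)%nat -> (j < N)%nat -> 0 <= pi i j)
  (Hps : forall i, (i < N)%nat -> rsum N (fun j => pi i j) = 1)
  (Hf : forall i, (i < N)%nat -> good_map (f i))
  (Hmu : ergodic N pi f mu)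
  (HE : forall j, (j < N)%nat -> borel (E j))
  (Habs : forall i j x, (i < N)%nat -> (j < N)%nat -> pi i j > 0 -> inI x -> E i x -> E j (f i x)) :
  (forall j, (j < N)%nat -> mu j (fun y => ~ E j y) = 0) \/
  (forall j, (j < N)%nat -> mu j (E j) = 0).
Proof.
  destruct Hmu as [[[Hms Hprob] Hst] Herg].
  assert (HP : forall i B, (i < N)%nat -> borel B -> borel (fun x => inI x /\ B (f i x))).
  { intros i B Hi HB; apply borel_preimage; auto; apply good_contI; auto. }
  set (R0 := fun j B => rsum N (fun i => pi i j *
        mu i (fun x => (inI x /\ (B (f i x) /\ E j (f i x))) /\ ~ E i x))).
  assert (Eq1 : forall j B, (j < N)%nat -> borel B ->
     mu j (fun y => B y /\ E j y) =
     rsum N (fun i => pi i j * mu i (fun x => (inI x /\ B (f i x)) /\ E i x)) + R0 j B).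
  { intros j B Hj HB.
    rewrite (Hst j _ Hj (borel_inter _ _ HB (HE j Hj))).
    unfold R0; rewrite <- rsum_plus; apply rsum_ext; intros i Hi.
    rewrite (M_add (mu i) _ (E i) (Hms i Hi) (HP i _ Hi (borel_inter _ _ HB (HE j Hj))) (HE i Hi)).
    destruct (Hpn i j Hi Hj) as [Hlt|Heq].
    - rewrite (M_ext (mu i) (fun x => (inI x /\ B (f i x) /\ E j (f i x)) /\ E i x)
                            (fun x => (inI x /\ B (f i x)) /\ E i x)); [ring|].
      intro x; split; [tauto|]; intros [[H1 H2] H3]; split; [split; [auto| split; [auto| apply Habs with (i := i); auto]]| auto].
    - rewrite <- Heq; ring. }
  assert (HR0pos : forall j B, (j < N)%nat -> borel B -> forall i, (i < N)%nat ->
     0 <= pi i j * mu i (fun x => (inI x /\ (B (f i x) /\ E j (f i x))) /\ ~ E i x)).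
  { intros j B Hj HB i Hi; apply Rmult_le_pos; auto; apply M_pos; auto.
    apply borel_inter; [apply (HP i (fun y => B y /\ E j y)); auto; apply borel_inter; auto|].
    apply borel_compl; auto. }
  assert (HmE : forall i, (i < N)%nat ->
     mu i (fun x => (inI x /\ True) /\ E i x) = mu i (E i)).
  { intros i Hi; rewrite (M_inI (mu i) (E i)) by auto; apply M_ext; tauto. }
  assert (HmT : forall j, (j < N)%nat -> mu j (fun y => True /\ E j y) = mu j (E j)).
  { intros j Hj; apply M_ext; tauto. }
  assert (Htot : rsum N (fun j => R0 j (fun _ => True)) = 0).
  { assert (H := rsum_ext N (fun j => mu j (fun y => True /\ E j y))
       (fun j => rsum N (fun i => pi i j * mu i (fun x => (inI x /\ True) /\ E i x)) + R0 j (fun _ => True))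
       (fun j Hj => Eq1 j _ Hj borel_true)).
    rewrite rsum_plus in H.
    rewrite (rsum_ext N (fun j => mu j (fun y => True /\ E j y)) (fun j => mu j (E j))) in H
      by (intros; apply HmT; auto).
    rewrite (rsum_ext N (fun j => rsum N (fun i => pi i j * mu i (fun x => (inI x /\ True) /\ E i x)))
        (fun j => rsum N (fun i => pi i j * mu i (E i)))) in H
      by (intros j Hj; apply rsum_ext; intros i Hi; rewrite HmE; auto).
    rewrite rsum_swap in H.
    rewrite (rsum_ext N (fun i => rsum N (fun j => pi i j * mu i (E i))) (fun i => mu i (E i))) in H.
    - lra.
    - intros i Hi.
      rewrite (rsum_ext N (fun j => pi i j * mu i (E i)) (fun j => mu i (E i) * pi i j))
        by (intros; ring).
      rewrite rsum_scal, Hps; auto; ring. }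
  assert (HR0T : forall j, (j < N)%nat -> forall i, (i < N)%nat ->
     pi i j * mu i (fun x => (inI x /\ (True /\ E j (f i x))) /\ ~ E i x) = 0).
  { intros j Hj.
    apply (rsum_zero N (fun i => pi i j * mu i (fun x => (inI x /\ (True /\ E j (f i x))) /\ ~ E i x))).
    - intros; apply (HR0pos j (fun _ => True)); auto; apply borel_true.
    - apply (rsum_zero N (fun j => R0 j (fun _ => True))); auto.
      intros j' Hj'; apply rsum_ge0; intros; apply (HR0pos j' (fun _ => True)); auto; apply borel_true. }
  assert (HR0 : forall j B, (j < N)%nat -> borel B -> R0 j B = 0).
  { intros j B Hj HB.
    transitivity (rsum N (fun _ => 0)).
    2:{ clear; induction N; simpl; auto; rewrite IHN; ring. }
    apply rsum_ext; intros i Hi.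
    apply Rle_antisym.
    - rewrite <- (HR0T j Hj i Hi).
      apply Rmult_le_compat_l; auto.
      apply M_mono; auto.
      + apply borel_inter; [apply (HP i (fun y => B y /\ E j y)); auto; apply borel_inter; auto|].
        apply borel_compl; auto.
      + apply borel_inter; [apply (HP i (fun y => True /\ E j y)); auto; apply borel_inter; auto; apply borel_true|].
        apply borel_compl; auto.
      + tauto.
    - apply HR0pos; auto. }
  assert (St1 : forall j B, (j < N)%nat -> borel B ->
     mu j (fun y => B y /\ E j y) =
     rsum N (fun i => pi i j * mu i (fun x => (inI x /\ B (f i x)) /\ E i x))).
  { intros j B Hj HB; rewrite Eq1, HR0; auto; ring. }
  assert (St2 : forall j B, (j < N)%nat -> borel B ->
     mu j (fun y => B y /\ ~ E j y) =
     rsum N (fun i => pi i j * mu i (fun x => (inI x /\ B (f i x)) /\ ~ E i x))).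
  { intros j B Hj HB.
    assert (H := M_add (mu j) B (E j) (Hms j Hj) HB (HE j Hj)).
    assert (H2 := Hst j B Hj HB).
    assert (H3 : rsum N (fun i => pi i j * mu i (fun x => inI x /\ B (f i x))) =
       rsum N (fun i => pi i j * mu i (fun x => (inI x /\ B (f i x)) /\ E i x)) +
       rsum N (fun i => pi i j * mu i (fun x => (inI x /\ B (f i x)) /\ ~ E i x))).
    { rewrite <- rsum_plus; apply rsum_ext; intros i Hi.
      rewrite (M_add (mu i) _ (E i) (Hms i Hi) (HP i B Hi HB) (HE i Hi)); ring. }
    rewrite (St1 j B Hj HB) in H; lra. }
  set (t := rsum N (fun j => mu j (E j))).
  set (t' := rsum N (fun j => mu j (fun y => ~ E j y))).
  assert (Ht0 : 0 <= t) by (apply rsum_ge0; intros; apply M_pos; auto).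
  assert (Ht0' : 0 <= t') by (apply rsum_ge0; intros; apply M_pos; auto; apply borel_compl; auto).
  assert (Hsum : t + t' = 1).
  { rewrite <- Hprob; unfold t, t'; rewrite <- rsum_plus; apply rsum_ext; intros j Hj.
    rewrite (M_add (mu j) (fun _ => True) (E j) (Hms j Hj) borel_true (HE j Hj)).
    f_equal; apply M_ext; tauto. }
  destruct (Req_dec t' 0) as [Hz'|Hnz'].
  { left; intros j Hj; apply (rsum_zero N (fun j => mu j (fun y => ~ E j y))); auto.
    intros; apply M_pos; auto; apply borel_compl; auto. }
  destruct (Req_dec t 0) as [Hz|Hnz].
  { right; intros j Hj; apply (rsum_zero N (fun j => mu j (E j))); auto.
    intros; apply M_pos; auto. }
  exfalso.
  set (mu1 := fun j (B : R -> Prop) => / t * mu j (fun y => B y /\ E j y)).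
  set (mu2 := fun j (B : R -> Prop) => / t' * mu j (fun y => B y /\ ~ E j y)).
  assert (Htp : 0 < t) by lra.
  assert (Htp' : 0 < t') by lra.
  assert (SP1 : stat_prob N pi f mu1).
  { split; [split|].
    - intros k Hk; apply restr_measure; auto; left; apply Rinv_0_lt_compat; auto.
    - unfold mu1; rewrite rsum_scal.
      rewrite (rsum_ext N _ (fun j => mu j (E j))) by (intros; apply HmT; auto).
      fold t; field; auto.
    - intros j B Hj HB; unfold mu1.
      rewrite (rsum_ext N _ (fun i => / t * (pi i j * mu i (fun x => (inI x /\ B (f i x)) /\ E i x))))
        by (intros; ring).
      rewrite rsum_scal, St1; auto. }
  assert (SP2 : stat_prob N pi f mu2).
  { split; [split|].
    - intros k Hk; apply restr_measure; auto; [apply borel_compl; auto| left; apply Rinv_0_lt_compat; auto].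
    - unfold mu2; rewrite rsum_scal.
      rewrite (rsum_ext N _ (fun j => mu j (fun y => ~ E j y))) by (intros; apply M_ext; tauto).
      fold t'; field; auto.
    - intros j B Hj HB; unfold mu2.
      rewrite (rsum_ext N _ (fun i => / t' * (pi i j * mu i (fun x => (inI x /\ B (f i x)) /\ ~ E i x))))
        by (intros; ring).
      rewrite rsum_scal, St2; auto. }
  assert (Ht01 : 0 < t < 1) by lra.
  assert (Hdec : forall k B, (k < N)%nat -> borel B -> mu k B = t * mu1 k B + (1 - t) * mu2 k B).
  { intros k B Hk HB; unfold mu1, mu2.
    replace (1 - t) with t' by lra.
    rewrite (M_add (mu k) B (E k) (Hms k Hk) HB (HE k Hk)); field; split; auto. }
  assert (Hsm := Herg mu1 mu2 t SP1 SP2 Ht01 Hdec).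
  apply Hnz; unfold t.
  transitivity (rsum N (fun _ => 0)).
  2:{ clear; induction N; simpl; auto; rewrite IHN; ring. }
  apply rsum_ext; intros j Hj.
  assert (H := Hsm j (E j) Hj (HE j Hj)); unfold mu1, mu2 in H.
  rewrite (M_ext (mu j) (fun y => E j y /\ ~ E j y) (fun _ => False)) in H by tauto.
  rewrite (M_ext (mu j) (fun y => E j y /\ E j y) (E j)) in H by tauto.
  destruct (Hms j Hj) as [H0 _]; rewrite H0, Rmult_0_r in H.
  apply Rmult_integral in H; destruct H as [H|H]; auto.
  exfalso; apply Rinv_neq_0_compat in Hnz; auto.
Qed.

Lemma word_ext N pi f w j x : admissible N pi w -> (j < N)%nat -> pi (last w 0%nat) j > 0 ->
  admissible N pi (w ++ [j]) /\ hd 0%nat (w ++ [j]) = hd 0%nat w /\ last (w ++ [j]) 0%nat = j /\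
  acomp f (w ++ [j]) x = f (last w 0%nat) (acomp f w x).
Proof.
  intros [Hl [Hc Ha]] Hj Hp.
  assert (Hne : w <> []) by (intro; subst; simpl in Hl; lia).
  split; [|split; [|split]].
  - split; [rewrite length_app; lia|split].
    + intros c Hc'; apply in_app_or in Hc'; destruct Hc' as [H|[<-|[]]]; auto.
    + apply adm_chain_app; auto.
  - apply hd_app1; auto.
  - apply last_app1.
  - apply acomp_app; auto.
Qed.

Lemma G3_contra N pi f k x0
  (Hf : forall i, (i < N)%nat -> good_map (f i)) (HG3 : G3 N pi f)
  (Hpath : forall j, (j < N)%nat -> exists w, admissible N pi w /\ hd 0%nat w = k /\ last w 0%nat = j)
  (Hx0 : inI x0)
  (Huniq : forall j w w', (j < N)%nat ->
     admissible N pi w -> hd 0%nat w = k -> last w 0%nat = j ->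
     admissible N pi w' -> hd 0%nat w' = k -> last w' 0%nat = j ->
     acomp f w x0 = acomp f w' x0) : False.
Proof.
  apply HG3.
  set (P := fun j v => exists w, (admissible N pi w /\ hd 0%nat w = k /\ last w 0%nat = j) /\ acomp f w x0 = v).
  exists (fun j => epsilon (inhabits 0) (P j)).
  assert (Hspec : forall j, (j < N)%nat -> P j (epsilon (inhabits 0) (P j))).
  { intros j Hj; apply epsilon_spec.
    destruct (Hpath j Hj) as [w Hw]; exists (acomp f w x0); exists w; auto. }
  split.
  - intros i Hi; destruct (Hspec i Hi) as [w [[Hw1 [Hw2 Hw3]] <-]].
    destruct Hw1 as [Hl [Hc _]].
    pose proof (acomp_01 N f w x0 Hf Hc Hl Hx0); unfold inI; lra.
  - intros i j Hi Hj Hp.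
    destruct (Hspec i Hi) as [w [[Hw1 [Hw2 Hw3]] Hv]].
    destruct (Hspec j Hj) as [w' [[Hw1' [Hw2' Hw3']] Hv']].
    rewrite <- Hv, <- Hv'.
    rewrite <- Hw3 in Hp.
    destruct (word_ext N pi f w j x0 Hw1 Hj Hp) as [Ha [Hh [Hla Hac]]].
    rewrite Hw3 in Hac; rewrite <- Hac.
    apply (Huniq j); auto; congruence.
Qed.

Theorem mainTheorem6
  (N : nat) (a pi : nat -> nat -> R) (f : nat -> R -> R)
  (mu : nat -> (R -> Prop) -> R) (k k' : nat)
  (A_k B_k A_k' B_k' : R)
  (HN : (1 <= N)%nat)
  (Ha01 : forall i j, (i < N)%nat -> (j < N)%nat -> a i j = 0 \/ a i j = 1)
  (Hprim : exists p, (1 <= p)%nat /\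
     forall i j, (i < N)%nat -> (j < N)%nat -> mpow N a p i j > 0)
  (Hpi_nonneg : forall i j, (i < N)%nat -> (j < N)%nat -> 0 <= pi i j)
  (Hpi_stoch : forall i, (i < N)%nat -> rsum N (fun j => pi i j) = 1)
  (Hpi_a : forall i j, (i < N)%nat -> (j < N)%nat -> (pi i j > 0 <-> a i j = 1))
  (Hf : forall i, (i < N)%nat -> good_map (f i))
  (HG1 : G1 N pi f) (HG2 : G2 N pi f) (HG3 : G3 N pi f)
  (Hmu : ergodic N pi f mu)
  (Hk : (k < N)%nat) (Hk' : (k' < N)%nat)
  (HAk : is_min_supp (mu k) A_k) (HBk : is_max_supp (mu k) B_k)
  (HAk' : is_min_supp (mu k') A_k') (HBk' : is_max_supp (mu k') B_k') :
  forall eps, eps > 0 ->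
    exists wA wB : list nat,
      admissible N pi wA /\ hd 0%nat wA = k /\ last wA 0%nat = k' /\
      admissible N pi wB /\ hd 0%nat wB = k /\ last wB 0%nat = k' /\
      (forall x, A_k <= x <= B_k -> Rabs (acomp f wA x - A_k') < eps) /\
      (forall x, A_k <= x <= B_k -> Rabs (acomp f wB x - B_k') < eps).
Proof.
  intros eps Heps.
  pose proof Hmu as [[[Hms _] Hst] _].
  set (W := fun j w => admissible N pi w /\ hd 0%nat w = k /\ last w 0%nat = j).
  assert (Hpath : forall j, (j < N)%nat -> exists w, W j w).
  { intros j Hj; destruct Hprim as [p [Hp Hm]].
    destruct (path_exists N a pi Ha01 Hpi_a p k j Hk Hj (Hm k j Hk Hj)) as [w [_ [H1 [H2 [H3 [H4 H5]]]]]].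
    exists w; repeat split; auto; lia. }
  assert (Hext : forall i j w x, (j < N)%nat -> W i w -> pi i j > 0 ->
            W j (w ++ [j]) /\ acomp f (w ++ [j]) x = f i (acomp f w x)).
  { intros i j w x Hj [Hw1 [Hw2 Hw3]] Hp; rewrite <- Hw3 in Hp.
    destruct (word_ext N pi f w j x Hw1 Hj Hp) as [H1 [H2 [H3 H4]]].
    split; [split; [exact H1| split; congruence]| rewrite H4, Hw3; auto]. }
  assert (Hsupp : forall j w x, W j w -> in_supp (mu k) x -> in_supp (mu j) (acomp f w x)).
  { intros j w x [[_ [Hc Ha]] [Hh Hl]] Hs; rewrite <- Hl.
    apply (supp_chain N pi f mu); auto; rewrite Hh; auto. }
  assert (HinW : forall j w x, W j w -> inI x -> inI (acomp f w x)).
  { intros j w x [[_ [Hc _]] _] Hx; apply (acomp_inI N); auto. }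
  assert (HmonoW : forall j w x y, W j w -> inI x -> inI y -> x <= y -> acomp f w x <= acomp f w y).
  { intros j w x y [[_ [Hc _]] _]; apply (acomp_mono N); auto. }
  assert (HAkI : inI A_k) by (apply (supp_inI (mu k)); [auto| apply HAk]).
  assert (HBkI : inI B_k) by (apply (supp_inI (mu k)); [auto| apply HBk]).
  assert (Hsmall : forall j B z r, (j < N)%nat -> borel B -> in_supp (mu j) z -> r > 0 ->
            (forall y, Rabs (y - z) < r -> B y) -> mu j B = 0 -> False).
  { intros j B z r Hj HB Hz Hr Hy H0.
    pose proof (Hz r Hr).
    assert (mu j (fun y => Rabs (y - z) < r) <= mu j B) by (apply M_mono; auto; apply borel_ball).
    lra. }
  set (E := fun j y => exists w, W j w /\ acomp f w B_k <= y).
  assert (HEb : forall j, (j < N)%nat -> borel (E j)).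
  { intros j Hj; apply borel_upset; intros y z [w [Hw H]] Hyz; exists w; split; auto; lra. }
  assert (HEa : forall i j x, (i < N)%nat -> (j < N)%nat -> pi i j > 0 -> inI x -> E i x -> E j (f i x)).
  { intros i j x Hi Hj Hp Hx [w [Hw H]].
    destruct (Hext i j w B_k Hj Hw Hp) as [Hw' Hac].
    exists (w ++ [j]); split; auto; rewrite Hac.
    apply good_le; [apply Hf; auto| eapply HinW; eauto| auto| auto]. }
  assert (PA : exists wA, W k' wA /\ acomp f wA B_k < A_k' + eps).
  { destruct (dichotomy N pi f mu E Hpi_nonneg Hpi_stoch Hf Hmu HEb HEa) as [HL|HR].
    - apply NNPP; intro Hn.
      apply (Hsmall k' (fun y => ~ E k' y) A_k' eps Hk' (borel_compl _ (HEb k' Hk')) (proj1 HAk') Heps).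
      + intros y Hy [w [Hw Hle]]; apply Hn; exists w; split; auto.
        unfold Rabs in Hy; destruct (Rcase_abs (y - A_k')); lra.
      + apply HL; auto.
    - exfalso. apply (G3_contra N pi f k B_k Hf HG3 Hpath HBkI).
      intros j w w' Hj Hw1 Hw2 Hw3 Hw1' Hw2' Hw3'.
      assert (Hw : W j w) by (split; [|split]; auto).
      assert (Hw' : W j w') by (split; [|split]; auto).
      assert (Hle : forall u v, W j u -> W j v -> acomp f u B_k <= acomp f v B_k).
      { intros u v Hu Hv; apply Rnot_lt_le; intro Hlt.
        apply (Hsmall j (E j) (acomp f u B_k) (acomp f u B_k - acomp f v B_k) Hj (HEb j Hj)
                 (Hsupp j u B_k Hu (proj1 HBk))); [lra| |apply HR; auto].
        intros y Hy; exists v; split; auto.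
        unfold Rabs in Hy; destruct (Rcase_abs (y - acomp f u B_k)); lra. }
      apply Rle_antisym; auto. }
  set (D := fun j y => exists w, W j w /\ y <= acomp f w A_k).
  assert (HDb : forall j, (j < N)%nat -> borel (D j)).
  { intros j Hj; apply borel_downset; intros y z [w [Hw H]] Hyz; exists w; split; auto; lra. }
  assert (HDa : forall i j x, (i < N)%nat -> (j < N)%nat -> pi i j > 0 -> inI x -> D i x -> D j (f i x)).
  { intros i j x Hi Hj Hp Hx [w [Hw H]].
    destruct (Hext i j w A_k Hj Hw Hp) as [Hw' Hac].
    exists (w ++ [j]); split; auto; rewrite Hac.
    apply good_le; [apply Hf; auto| auto| eapply HinW; eauto| auto]. }
  assert (PB : exists wB, W k' wB /\ acomp f wB A_k > B_k' - eps).
  { destruct (dichotomy N pi f mu D Hpi_nonneg Hpi_stoch Hf Hmu HDb HDa) as [HL|HR].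
    - apply NNPP; intro Hn.
      apply (Hsmall k' (fun y => ~ D k' y) B_k' eps Hk' (borel_compl _ (HDb k' Hk')) (proj1 HBk') Heps).
      + intros y Hy [w [Hw Hle]]; apply Hn; exists w; split; auto.
        unfold Rabs in Hy; destruct (Rcase_abs (y - B_k')); lra.
      + apply HL; auto.
    - exfalso. apply (G3_contra N pi f k A_k Hf HG3 Hpath HAkI).
      intros j w w' Hj Hw1 Hw2 Hw3 Hw1' Hw2' Hw3'.
      assert (Hw : W j w) by (split; [|split]; auto).
      assert (Hw' : W j w') by (split; [|split]; auto).
      assert (Hle : forall u v, W j u -> W j v -> acomp f u A_k <= acomp f v A_k).
      { intros u v Hu Hv; apply Rnot_lt_le; intro Hlt.
        apply (Hsmall j (D j) (acomp f v A_k) (acomp f u A_k - acomp f v A_k) Hj (HDb j Hj)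
                 (Hsupp j v A_k Hv (proj1 HAk))); [lra| |apply HR; auto].
        intros y Hy; exists u; split; auto.
        unfold Rabs in Hy; destruct (Rcase_abs (y - acomp f v A_k)); lra. }
      apply Rle_antisym; auto. }
  destruct PA as [wA [HwA HA]]; destruct PB as [wB [HwB HB]].
  exists wA, wB.
  destruct HwA as [HA1 [HA2 HA3]]; destruct HwB as [HB1 [HB2 HB3]].
  assert (HwA : W k' wA) by (split; [|split]; auto).
  assert (HwB : W k' wB) by (split; [|split]; auto).
  split; [|split; [|split; [|split; [|split; [|split; [|split]]]]]]; [auto..| |].
  - intros x Hx.
    assert (HxI : inI x) by (unfold inI in *; lra).
    assert (H1 := HmonoW k' wA x B_k HwA HxI HBkI (proj2 Hx)).
    assert (H2 := HmonoW k' wA A_k x HwA HAkI HxI (proj1 Hx)).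
    assert (H3 := proj2 HAk' _ (Hsupp k' wA A_k HwA (proj1 HAk))).
    unfold Rabs; destruct (Rcase_abs (acomp f wA x - A_k')); lra.
  - intros x Hx.
    assert (HxI : inI x) by (unfold inI in *; lra).
    assert (H1 := HmonoW k' wB x B_k HwB HxI HBkI (proj2 Hx)).
    assert (H2 := HmonoW k' wB A_k x HwB HAkI HxI (proj1 Hx)).
    assert (H3 := proj2 HBk' _ (Hsupp k' wB B_k HwB (proj1 HBk))).
    unfold Rabs; destruct (Rcase_abs (acomp f wB x - B_k')); lra.
Qed.
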